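(* A locally connected Hausdorff space $X$ has a Hausdorff one-point connectification if and only if $X$ has no almost compact component.
   Context: A one-point connectification of a space $X$ is a connected space $Y$ which contains $X$ as a dense subspace and such that $Y\setminus X$ is a singleton. A space $X$ is almost compact if for every open cover $\mathscr{U}$ of $X$ there is a finite subcollection $\mathscr{V}\subseteq\mathscr{U}$ with $X=\mathrm{cl}_X\bigcup\mathscr{V}$. *)

(* Defs.v *)
From HB Require Import structures.
From mathcomp Require Import all_boot all_order all_algebra.
From mathcomp Require Import all_classical all_reals all_analysis.
Set Implicit Arguments. Unset Strict Implicit. Unset Printing Implicit Defensive.
Local Open Scope classical_set_scope.

Definition locally_connected (T : topologicalType) : Prop :=
  forall (x : T) (U : set T), nbhs x U ->
    exists V : set T, [/\ open V, V x, connected V & V `<=` U].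

(* A subset A of T, with the subspace topology, is almost compact:
   every cover of A by open sets of the subspace A (i.e. traces A `&` U of open
   sets U of T) has a finite subfamily whose union is dense in A, i.e. whose
   closure in A (= A `&` closure in T) is all of A. *)
Definition almost_compact_set (T : topologicalType) (A : set T) : Prop :=
  forall (I : Type) (U : I -> set T),
    (forall i, open (U i)) -> A `<=` \bigcup_i U i ->
    exists F : set I, finite_set F /\
      A `<=` closure (A `&` \bigcup_(i in F) U i).

Definition component (T : topologicalType) (C : set T) : Prop :=
  exists x : T, C = connected_component setT x.

Definition embedding (X Y : topologicalType) (e : X -> Y) : Prop :=
  [/\ injective e, continuous e &
      forall U : set X, open U -> exists V : set Y, open V /\ e @` U = V `&` range e].

Definition has_hausdorff_one_point_connectification (X : topologicalType) : Prop :=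
  exists (Y : topologicalType) (e : X -> Y),
    [/\ hausdorff_space Y, connected [set: Y], embedding e, dense (range e) &
        exists p : Y, ~` range e = [set p]].

(* Main.v *)
From HB Require Import structures.
Require Import Defs.
From mathcomp Require Import all_boot all_order all_algebra.
From mathcomp Require Import all_classical all_reals all_analysis.
Set Implicit Arguments. Unset Strict Implicit. Unset Printing Implicit Defensive.
Local Open Scope classical_set_scope.

Section OPC.
Variables (X : topologicalType) (W : X -> set X).
Definition NF (F : set X) : set X := ~` closure (\bigcup_(x in F) W x).
Definition opc_op (S : set (option X)) : Prop :=
  open (Some @^-1` S) /\
  (S None -> exists F : set X, finite_set F /\ NF F `<=` Some @^-1` S).

Lemma NF_mono F G : F `<=` G -> NF G `<=` NF F.
Proof.
move=> FG y Ny Hc; apply: Ny; apply: closureS Hc.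
by move=> z [x Fx Wxz]; exists x => //; apply: FG.
Qed.

Lemma opc_opT : opc_op setT.
Proof.
split; first by rewrite preimage_setT; exact: openT.
by move=> _; exists set0; split => //.
Qed.

Lemma opc_opI : setI_closed opc_op.
Proof.
move=> A B [oA hA] [oB hB]; split; first by rewrite preimage_setI; exact: openI.
move=> [/hA [F [fF NFA]] /hB [G [fG NGB]]]; exists (F `|` G); split.
  by rewrite finite_setU.
move=> y Ny; split.
  by apply: NFA; apply: NF_mono Ny => z Fz; left.
by apply: NGB; apply: NF_mono Ny => z Fz; right.
Qed.

Lemma opc_op_bigU (I : Type) (f : I -> set (option X)) :
  (forall i, opc_op (f i)) -> opc_op (\bigcup_i f i).
Proof.
move=> hf; split.
  rewrite preimage_bigcup; apply: bigcup_open => i _; exact: (hf i).1.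
move=> [i _ fi]; have [F [fF NFf]] := (hf i).2 fi.
by exists F; split => // y /NFf fy; exists i.
Qed.
End OPC.

Definition opc (X : topologicalType) (W : X -> set X) := option X.
HB.instance Definition _ (X : topologicalType) (W : X -> set X) :=
  Choice.copy (opc W) (option X).
HB.instance Definition _ (X : topologicalType) (W : X -> set X) :=
  isOpenTopological.Build (opc W) (@opc_opT X W) (@opc_opI X W) (@opc_op_bigU X W).

Lemma opc_openE (X : topologicalType) (W : X -> set X) (S : set (opc W)) :
  open S = opc_op W S.
Proof. by []. Qed.

Section Back.
Variables (X : topologicalType) (W : X -> set X).
Hypothesis hWo : forall x, open (W x).
Hypothesis hWin : forall x, W x x.
Hypothesis hP : forall F : set X, finite_set F -> forall x0 : X,
  exists c, connected_component setT x0 c /\ NF W F c.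
Hypothesis hX : [set: X] !=set0.
Hypothesis hH : hausdorff_space X.

Local Notation Y := (opc W).

Lemma NF_open F : open (NF W F).
Proof. exact/closed_openC/closed_closure. Qed.

Lemma some_open (U : set X) : open U -> open (Some @` U : set Y).
Proof.
move=> oU; rewrite opc_openE; split.
  suff -> : Some @^-1` (Some @` U) = U by [].
  by apply/seteqP; split => [y [z Uz [<-]]|y Uy] //; exists y.
by case.
Qed.

Lemma some_cont : continuous (Some : X -> Y).
Proof. by apply/continuousP => A; rewrite opc_openE => -[]. Qed.

Lemma Y_emb : embedding (Some : X -> Y).
Proof.
split; [by move=> a b [] | exact: some_cont|].
move=> U oU; exists (Some @` U); split; first exact: some_open.
by apply/esym/setIidl => y [x _ <-]; exists x.
Qed.

Lemma Y_compl : ~` range (Some : X -> Y) = [set None].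
Proof.
apply/seteqP; split => -[y|] //=.
  by move=> H; exfalso; apply: H; exists y.
by move=> _ [].
Qed.

Lemma Y_dense : dense (range (Some : X -> Y)).
Proof.
move=> O [[y|] Oy] oO.
  by exists (Some y); split => //; exists y.
move: oO; rewrite opc_openE => -[_ /(_ Oy) [F [fF NFO]]].
have [x0 _] := hX; have [c [_ Nc]] := hP fF x0.
by exists (Some c); split; [exact: NFO | exists c].
Qed.

Lemma Y_clopen_none (S : set Y) : clopen S -> ~ S None -> S = set0.
Proof.
move=> cS SN; apply/seteqP; split => // -[x|] Sx //.
have cP : clopen (Some @^-1` S) := preimage_clopen cS some_cont.
have ccP : connected_component setT x `<=` Some @^-1` S.
  have := connected_subset (proj1 (clopen_separatedP _) cP)
     (C := connected_component setT x) _ (@component_connected _ _ _).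
  case => //.
    by move=> y _; have [] := pselect (S (Some y)); [left|right].
  by move=> /(_ x (connected_component_refl _)) H; exfalso; apply: H.
have [oC _] := clopenC S cS.
move: oC; rewrite opc_openE => -[_ /(_ SN) [F [fF NFC]]].
have [c [cc Nc]] := hP fF x.
by apply: (NFC _ Nc); apply: ccP.
Qed.

Lemma Y_connected : connected [set: Y].
Proof.
move=> B B0 [C oC BC] [D cD BD].
have cB : clopen B by split; [rewrite BC setTI|rewrite BD setTI].
have [BN|BN] := pselect (B None).
  have : ~` B = set0 by apply: Y_clopen_none; [exact: clopenC|].
  move=> H; apply/seteqP; split => // y _.
  by apply: contrapT => nBy; have : (~` B) y by []; rewrite H.
by have := Y_clopen_none cB BN => H; case: B0; rewrite H => y [].
Qed.

Lemma Y_hausdorff : hausdorff_space Y.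
Proof.
rewrite open_hausdorff.
have side : forall a : X, exists2 AB : set Y * set Y,
    (Some a \in AB.1 /\ None \in AB.2) &
    [/\ open AB.1, open AB.2 & AB.1 `&` AB.2 == set0].
  move=> a.
  exists (Some @` W a, [set None] `|` Some @` NF W [set a]).
    by split; rewrite inE /=; [exists a|left].
  split; first exact: some_open.
    rewrite opc_openE; split.
      suff -> : Some @^-1` ([set None] `|` Some @` NF W [set a]) = NF W [set a].
        exact: NF_open.
      apply/seteqP; split => [y [//|[z Nz [<-]]]//|y Ny]; by right; exists y.
    move=> _; exists [set a]; split; first exact: finite_set1.
    by move=> y Ny; right; exists y.
  apply/eqP/seteqP; split => // y [[z Wz <-]] [//|[t Nt [tz]]].
  subst t; apply: Nt => B /nbhs_singleton Bz.
  by exists z; split => //; exists a.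
move=> [x|] [y|] //= xy.
- have /eqP xy' : x != y by apply: contraNneq xy => ->.
  move: hH; rewrite open_hausdorff => /(_ x y) [].
    exact/eqP.
  move=> [A B] /= [xA yB] [oA oB AB].
  exists (Some @` A, Some @` B) => /=.
    split; apply/mem_set; [exists x => //; exact/set_mem | exists y => //; exact/set_mem].
  split; [exact: some_open|exact: some_open|].
  apply/eqP/seteqP; split => // _ [[z Az <-]] [t Bt [tz]]; subst t.
  by move/eqP: AB => AB; have : (A `&` B) z by [] ; rewrite AB.
- have [[A B] /= [h1 h2] [oA oB AB]] := side y.
  by exists (B, A) => //=; split => //; rewrite setIC.
Qed.

End Back.

Lemma cc_open (X : topologicalType) (x : X) :
  locally_connected X -> open (connected_component setT x).
Proof.
move=> lc; rewrite openE => y cxy.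
have [V [oV Vy cV _]] := lc y setT filterT.
apply: (@filterS _ _ _ V); last exact: open_nbhs_nbhs.
rewrite (same_connected_component cxy).
exact: connected_component_max.
Qed.

Lemma cc_refl (X : topologicalType) (x : X) : connected_component setT x x.
Proof. exact: connected_component_refl. Qed.

Lemma forward (X : topologicalType) :
  locally_connected X -> has_hausdorff_one_point_connectification X ->
   ~ (exists C : set X, component C /\ almost_compact_set C).
Proof.
move=> lc [Y [e [hY cY [einj econt eop] _ [p hp]]]] [C [[x0 ->] acC]].
set C0 := connected_component setT x0.
have oC : open C0 by exact: cc_open.
have clC : closed C0 by apply: component_closed; exact: closedT.
have pn : forall x, e x <> p.
  by move=> x exp; have : [set p] p by []; rewrite -hp => /(_ (ex_intro2 _ _ x I exp)).
have : forall x, exists AB : set Y * set Y,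
    [/\ AB.1 (e x), AB.2 p, open AB.1, open AB.2 & AB.1 `&` AB.2 = set0].
  move=> x; move: hY; rewrite open_hausdorff => /(_ (e x) p).
  case; first by apply/eqP; exact: pn.
  move=> AB' [h1 h2] [oa ob d]; exists AB'; split => //.
  - exact: set_mem h1.
  - exact: set_mem h2.
  - exact/eqP.
move=> /choice [AB hAB].
have oU : forall x, open (e @^-1` (AB x).1).
  by move=> x; have [_ _ ? _ _] := hAB x; apply: open_comp => // y _; exact: econt.
have cU : C0 `<=` \bigcup_x (e @^-1` (AB x).1).
  by move=> x _; exists x => //; have [] := hAB x.
have [F [fF CF]] := acC X (fun x => e @^-1` (AB x).1) oU cU.
set V := \bigcap_(x in F) (AB x).2.
have nV : nbhs p V.
  rewrite /V -(fset_setK fF); apply: filter_bigI => i _.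
  by have [_ ? _ ? _] := hAB i; apply: open_nbhs_nbhs; split.
have pnc : ~ closure (e @` C0) p.
  move=> /(_ _ (nbhs_interior nV)) [_ [[c Cc <-] Vc]].
  have : nbhs c (e @^-1` V°).
    apply: econt; apply: open_nbhs_nbhs; split => //; exact: open_interior.
  move=> /(CF c Cc) [c' [[_ [x Fx Uc']] Vc']].
  have : ((AB x).1 `&` (AB x).2) (e c').
    by split => //; apply: (interior_subset Vc').
  by have [_ _ _ _ ->] := hAB x.
set E := e @` C0.
have oE : open E.
  have [V' [oV' EV]] := eop _ oC; rewrite /E EV.
  have -> : range e = ~` [set p] by rewrite -hp setCK.
  apply: openI => //; apply: closed_openC.
  by apply: accessible_closed_set1; exact: hausdorff_accessible.
have clE : closed E.
  rewrite closure_id; apply/seteqP; split; first exact: subset_closure.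
  move=> y cy; have [yp|ynp] := pselect (y = p).
    by subst y.
  have [x _ exy] : range e y.
    by apply: contrapT => ny; apply: ynp; have : (~` range e) y by []; rewrite hp.
  rewrite -exy; exists x => //; rewrite ((closure_id C0).1 clC) => B nB.
  have [B' [[oB' B'x] B'B]] : exists B', open_nbhs x B' /\ B' `<=` B.
    by move: nB; rewrite nbhsE => -[B' ? ?]; exists B'.
  have [V' [oV' EV]] := eop _ oB'.
  have V'y : V' y.
    have : (e @` B') y by exists x.
    by rewrite EV => -[].
  have [_ [[c Cc <-] V'c]] := cy _ (open_nbhs_nbhs (conj oV' V'y)).
  have : (e @` B') (e c) by rewrite EV; split => //; exists c.
  move=> [b Bb /einj ebc]; subst b.
  by exists c; split => //; apply: B'B.
have E0 : E !=set0 by exists (e x0); exists x0 => //; exact: cc_refl.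
have ET := cY E E0 (ex_intro2 _ _ E oE (esym (setTI E)))
                   (ex_intro2 _ _ E clE (esym (setTI E))).
apply: pnc; rewrite -/E -((closure_id E).1 clE) ET; done.
Qed.

Lemma bad_cover (X : topologicalType) (C : set X) :
  C !=set0 -> ~ almost_compact_set C ->
  exists V : X -> set X, [/\ forall x, open (V x), forall x, C x -> V x x &
    forall F, finite_set F -> ~ C `<=` closure (C `&` \bigcup_(x in F) V x)].
Proof.
move=> [x0 Cx0] nac.
have [I [U [oU cU bad]]] : exists I (U : I -> set X), [/\ forall i, open (U i),
    C `<=` \bigcup_i U i & forall F : set I, finite_set F ->
    ~ C `<=` closure (C `&` \bigcup_(i in F) U i)].
  apply: contrapT => H; apply: nac => I U oU cU; apply: contrapT => nF.
  apply: H; exists I, U; split => // F fF CF; apply: nF; by exists F.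
have [i0 _ Ui0] := cU _ Cx0.
have : forall x, exists j, C x -> U j x.
  move=> x; have [Cx|nCx] := pselect (C x).
    by have [j _ Uj] := cU _ Cx; exists j.
  by exists i0.
move=> /choice [g hg].
exists (U \o g); split => [x|x Cx|F fF CF]; [exact: oU|exact: hg|].
apply: (bad (g @` F)); first exact: finite_image.
move=> c /CF; apply: closureS => y [Cy [x Fx Uy]]; split => //.
by exists (g x) => //; exists x.
Qed.

Lemma backward (X : topologicalType) :
  [set: X] !=set0 ->
  hausdorff_space X -> locally_connected X ->
   ~ (exists C : set X, component C /\ almost_compact_set C) ->
  has_hausdorff_one_point_connectification X.
Proof.
move=> hX hH lc nac.
have : forall C : set X, exists V : X -> set X, component C ->
    [/\ forall x, open (V x), forall x, C x -> V x x &
    forall F, finite_set F -> ~ C `<=` closure (C `&` \bigcup_(x in F) V x)].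
  move=> C; have [cC|ncC] := pselect (component C); last first.
    by exists (fun _ => set0).
  have [V hV] : exists V : X -> set X, [/\ forall x, open (V x), forall x, C x -> V x x &
    forall F, finite_set F -> ~ C `<=` closure (C `&` \bigcup_(x in F) V x)].
    apply: bad_cover.
      by case: cC => x ->; exists x; exact: cc_refl.
    by move=> acC; apply: nac; exists C.
  by exists V.
move=> /choice [VV hVV].
pose cc x := connected_component [set: X] x.
have ccC : forall x, component (cc x) by move=> x; exists x.
pose W x := VV (cc x) x `&` cc x.
have hWo : forall x, open (W x).
  move=> x; apply: openI; last exact: cc_open.
  by have [] := hVV _ (ccC x).
have hWin : forall x, W x x.
  move=> x; split; last exact: cc_refl.
  by have [_ h _] := hVV _ (ccC x); apply: h; exact: cc_refl.
have hP : forall F : set X, finite_set F -> forall x0 : X,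
    exists c, connected_component setT x0 c /\ NF W F c.
  move=> F fF x0; apply: contrapT => H.
  have [_ _ bad] := hVV _ (ccC x0); apply: (bad F fF) => c Cc B nB.
  have nBC : nbhs c (B `&` cc x0).
    by apply: filterI => //; apply: open_nbhs_nbhs; split => //; exact: cc_open.
  have : closure (\bigcup_(x in F) W x) c.
    by apply: contrapT => nc; apply: H; exists c.
  move=> /(_ _ nBC) [y [[x Fx [VVy ccxy]] [By Cy]]].
  have ex : cc x = cc x0.
    by rewrite /cc (same_connected_component ccxy) -(same_connected_component Cy).
  exists y; split => //; split => //; exists x => //.
  by rewrite -ex.
exists (opc W), Some; split.
- exact: Y_hausdorff.
- exact: Y_connected.
- exact: Y_emb.
- exact: Y_dense.
- by exists None; exact: Y_compl.
Qed.

Theorem theorem2p10 (X : topologicalType) :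
  [set: X] !=set0 ->
  hausdorff_space X -> locally_connected X ->
  (has_hausdorff_one_point_connectification X <->
   ~ (exists C : set X, component C /\ almost_compact_set C)).
Proof.
move=> hX hH lc; split; first exact: forward.
exact: backward.
Qed.
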